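(* Suppose $(a_1,a_1),\dots,(a_\ell,a_\ell)\in R$ are distinct, and that there exist $\bullet_1,\dots,\bullet_\ell\in\{\circ,\ast\}$ such that $a_1\bullet_1a_1,\dots,a_\ell\bullet_\ell a_\ell$ are pairwise distinct. Then $\pi\ge\ell(n-2q-m+1)$. Moreover, such $\bullet_i$ always exist if $n$ is odd or if $\ell=2$.
   Context: $G$ is a set of size $n$ and $G(\circ)$, $G(\ast)$ are distinct groups on $G$ with the same identity element. $\mathrm{diff}(\circ,\ast)=\{(a,b):a\circ b\ne a\ast b\}$, $\mathrm{dist}(\circ,\ast)=|\mathrm{diff}(\circ,\ast)|$, $\mathrm{dist}_a=|\{b:a\circ b\ne a\ast b\}|$; $H=\{a:\mathrm{dist}_a=0\}$, $h=|H|$; $K=\{a:\mathrm{dist}_a<n/3\}$, $k=|K|$; $m=\min\{\mathrm{dist}_a:\mathrm{dist}_a>0\}$. Standing assumption: $m\ge 3$. Let $q=\lceil n/3\rceil$ and the profit $\pi=\mathrm{dist}(\circ,\ast)-((k-h)m+(n-k)q)$. Let $R=\{(a,a)\in\mathrm{diff}(\circ,\ast):a\in K\}$, $r=|R|$. *)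

(* Defs.v *)
From mathcomp Require Import all_boot all_order all_algebra.
Set Implicit Arguments. Unset Strict Implicit. Unset Printing Implicit Defensive.
Import GRing.Theory Num.Theory.

Section Defs.
Variable T : finType.

Definition is_group (op : T -> T -> T) (e : T) : Prop :=
  [/\ associative op, left_id e op, right_id e op &
      forall x, exists y, op y x = e /\ op x y = e].

Variables (mul1 mul2 : T -> T -> T).

Definition nG : nat := #|T|.
Definition diffs : {set T * T} := [set p | mul1 p.1 p.2 != mul2 p.1 p.2].
Definition dist : nat := #|diffs|.
Definition dista (a : T) : nat := #|[set b | mul1 a b != mul2 a b]|.
Definition Hset : {set T} := [set a | dista a == 0].
Definition hG : nat := #|Hset|.
(* dist_a < n/3  <=>  3 * dist_a < n *)
Definition Kset : {set T} := [set a | 3 * dista a < nG].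
Definition kG : nat := #|Kset|.
(* min of the positive dist_a; default nG is harmless since dist_a <= n
   and the groups are distinct *)
Definition mG : nat := \big[minn/nG]_(a | 0 < dista a) dista a.
Definition qG : nat := (nG + 2) %/ 3.
Definition profit : int :=
  (dist%:Z - ((kG%:Z - hG%:Z) * mG%:Z + (nG%:Z - kG%:Z) * qG%:Z))%R.
Definition Rset : {set T * T} :=
  [set p | [&& p \in diffs, p.1 == p.2 & p.1 \in Kset]].
End Defs.

(* Main.v *)
From HB Require Import structures.
Require Import Defs.
From mathcomp Require Import all_boot all_order all_algebra all_fingroup all_solvable.
From mathcomp Require Import zify.
Set Implicit Arguments. Unset Strict Implicit. Unset Printing Implicit Defensive.

Definition grp (T : finType) (op : T -> T -> T) (e : T) (G : is_group op e) : Type := T.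
HB.instance Definition _ (T : finType) (op : T -> T -> T) (e : T) (G : is_group op e) :=
  Finite.copy (grp G) T.
Definition ginv (T : finType) (op : T -> T -> T) (e : T) (x : T) : T :=
  odflt x [pick y | op y x == e].
Section GI.
Variables (T : finType) (op : T -> T -> T) (e : T) (G : is_group op e).
Lemma ginvP : left_inverse e (ginv op e) op.
Proof.
move=> x; rewrite /ginv; case: pickP => [y /eqP //|H].
case: G => _ _ _ /(_ x) [y [Hy _]]; by move: (H y); rewrite Hy eqxx.
Qed.
Lemma gA : associative op. Proof. by case: G. Qed.
Lemma g1 : left_id e op. Proof. by case: G. Qed.
End GI.
HB.instance Definition _ (T : finType) (op : T -> T -> T) (e : T) (G : is_group op e) :=
  @Finite_isGroup.Build (grp G) op e (ginv op e) (gA G) (g1 G) (ginvP G).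

Local Open Scope group_scope.
Lemma sq_inj (T : finType) (op : T -> T -> T) e (G : is_group op e) : odd #|T| ->
  injective (fun x : T => op x x).
Proof.
move=> hodd.
have key : forall z : grp G, z = (z ^+ 2) ^+ (#|T|.+1./2).
  move=> z; rewrite -expgM mul2n.
  have -> : (#|T|.+1./2).*2 = #|T|.+1.
    by rewrite -{2}(odd_double_half #|T|.+1) /= hodd.
  rewrite expgSr.
  have H := expg_cardG (in_setT z). rewrite cardsT in H.
  have hc : #|T| = #|{: grp G}| := @bij_eq_card T (grp G : finType) id (@Bijective _ _ _ id (fun _ => erefl) (fun _ => erefl)).
  by rewrite hc H mul1g.
move=> x y /= hxy.
rewrite (key x) (key y).
have E : forall z : grp G, z ^+ 2 = op z z by [].
by rewrite !E hxy.
Qed.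
Local Close Scope group_scope.

Lemma bigmin_leq (T : finType) (P : pred T) (F : T -> nat) x j :
  P j -> \big[minn/x]_(i | P i) F i <= F j.
Proof.
move=> Pj; rewrite /index_enum; have : j \in Finite.enum T by rewrite -enumT mem_enum.
elim: (Finite.enum T) => [//|i r IH]; rewrite inE big_cons.
case/orP=> [/eqP <-|jr]; first by rewrite Pj geq_minl.
case: (P i); last exact: IH.
exact: leq_trans (geq_minr _ _) (IH jr).
Qed.

Section Main.
Variables (T : finType) (op1 op2 : T -> T -> T) (e : T).
Hypotheses (G1 : is_group op1 e) (G2 : is_group op2 e).

Lemma lcancel_g (op : T -> T -> T) : is_group op e -> forall a, injective (op a).
Proof.
case=> A l r inv a x y hxy.
case: (inv a) => b [hb _].
by rewrite -(l x) -(l y) -hb -!A hxy.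
Qed.

Lemma rcancel_g (op : T -> T -> T) : is_group op e -> forall a y z, op y a = op z a -> y = z.
Proof.
case=> A l r inv a y z hyz.
case: (inv a) => b [_ hb].
by rewrite -(r y) -(r z) -hb !A hyz.
Qed.

Lemma row_bound a : op1 a a != op2 a a ->
  #|T| <= #|[set x | op1 (op1 a a) x != op2 (op1 a a) x]| + 2 * #|[set b | op1 a b != op2 a b]|.
Proof.
move=> hne.
set S := [set b | op1 a b != op2 a b].
set D := [set x | _ != _].
have sub : ~: D \subset S :|: op1 a @^-1: S.
  apply/subsetP => x; rewrite !inE negbK => /eqP hx.
  case: (op1 a x =P op2 a x) => //= h1; case: (op1 a (op1 a x) =P op2 a (op1 a x)) => //= h2; exfalso.
  have : op2 (op1 a a) x = op2 (op2 a a) x.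
    case: G1 => A1 _ _ _; case: G2 => A2 _ _ _.
    by rewrite -hx -A1 h2 h1 A2.
  by move/(rcancel_g G2) => /eqP; rewrite (negbTE hne).
have := subset_leq_card sub.
have hU := cardsU S (op1 a @^-1: S).
rewrite (card_preimset _ (lcancel_g G1 (a:=a))) in hU.
have hC := cardsC D.
lia.
Qed.
End Main.

Lemma sum_ind (T : finType) (A : {set T}) : \sum_a ((a \in A) : nat) = #|A|.
Proof. by rewrite -sum1_card [RHS]big_mkcond /=; apply: eq_bigr => i _; case: (i \in A). Qed.

Section Main2.
Variables (T : finType) (mul1 mul2 : T -> T -> T) (e : T).
Hypotheses (G1 : is_group mul1 e) (G2 : is_group mul2 e).
Local Notation d := (dista mul1 mul2).
Local Notation n := (nG T).
Local Notation m := (mG mul1 mul2).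
Local Notation q := (qG T).
Local Notation K := (Kset mul1 mul2).
Local Notation H := (Hset mul1 mul2).

Lemma dist_sum : dist mul1 mul2 = \sum_a d a.
Proof.
rewrite /dist /dista -sum1_card.
rewrite (eq_bigr (fun a => \sum_(b in [set b | mul1 a b != mul2 a b]) 1)); last by move=> a _; rewrite sum1_card.
rewrite pair_big_dep /=.
by apply: eq_bigl => -[x y]; rewrite !inE.
Qed.

Lemma n_gt0 : 0 < n.
Proof. by rewrite /nG; apply/card_gt0P; exists e. Qed.

Lemma HsubK : H \subset K.
Proof. apply/subsetP => a; rewrite !inE => /eqP ->; rewrite muln0; exact: n_gt0. Qed.

Definition base a := if a \in H then 0 else if a \in K then m else q.

Lemma base_sum : \sum_a base a = (kG mul1 mul2 - hG mul1 mul2) * m + (n - kG mul1 mul2) * q.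
Proof.
have -> : \sum_a base a = \sum_a (((a \in K :\: H) : nat) * m + ((a \in ~: K) : nat) * q).
  apply: eq_bigr => a _; rewrite /base in_setD in_setC.
  case: (boolP (a \in H)) => hH /=; first by rewrite (subsetP HsubK _ hH).
  by case: (a \in K) => /=; rewrite ?mul1n ?mul0n ?addn0 ?add0n.
rewrite big_split /= -!big_distrl /= !sum_ind cardsD (setIidPr HsubK).
have := cardsC K; rewrite /kG /hG /nG; move=> hc.
by rewrite -hc addKn.
Qed.

Lemma base_le a : base a <= d a.
Proof.
rewrite /base; case: ifP => // hH; case: ifP => hK.
  rewrite /mG; apply: bigmin_leq; rewrite lt0n; move: hH; by rewrite inE => ->.
move: hK; rewrite inE /qG => /negbT; rewrite -leqNgt => h; lia.
Qed.


Import GRing.Theory Num.Theory.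
Lemma profit_eq : profit mul1 mul2 = ((\sum_a (d a - base a))%N%:Z)%R.
Proof.
have hs : \sum_a d a = \sum_a base a + \sum_a (d a - base a).
  by rewrite -big_split /=; apply: eq_bigr => a _; rewrite subnKC // base_le.
have hk : hG mul1 mul2 <= kG mul1 mul2 by apply: subset_leq_card HsubK.
have hn : kG mul1 mul2 <= n by apply: max_card.
rewrite /profit dist_sum hs base_sum.
rewrite !subzn //; [by rewrite addKn | exact: leq_addr].
Qed.

Lemma rowc (a : T) (b : bool) : (a, a) \in diffs mul1 mul2 ->
  n <= d (if b then mul1 a a else mul2 a a) + 2 * d a.
Proof.
rewrite inE /= => hne; case: b.
  exact: (row_bound G1 G2 hne).
have E : forall y, [set x | mul2 y x != mul1 y x] = [set x | mul1 y x != mul2 y x].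
  by move=> y; apply/setP => x; rewrite !inE eq_sym.
have := row_bound G2 G1 (a:=a); rewrite eq_sym => /(_ hne).
by rewrite !E.
Qed.


Lemma part1 (l : nat) (a : 'I_l -> T) (bul : 'I_l -> bool) :
  injective a -> (forall i, (a i, a i) \in Rset mul1 mul2) ->
  injective (fun i => if bul i then mul1 (a i) (a i) else mul2 (a i) (a i)) ->
  l * (n.+1 - (2 * q + m)) <= \sum_x (d x - base x).
Proof.
move=> ainj aR cinj.
set c := (fun i => _) in cinj.
have aD i : (a i, a i) \in diffs mul1 mul2 by move: (aR i); rewrite inE => /and3P[].
have aK i : a i \in K by move: (aR i); rewrite inE => /and3P[].
have adpos i : 0 < d (a i).
  rewrite /dista lt0n cards_eq0; apply/set0Pn; exists (a i); move: (aD i); by rewrite !inE.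
have aH i : a i \notin H by rewrite inE -lt0n adpos.
have hc i : n <= d (c i) + 2 * d (a i) by exact: rowc (aD i).
have aK' i : 3 * d (a i) < n by move: (aK i); rewrite inE.
have cK i : c i \notin K.
  rewrite inE -leqNgt; have := hc i; have := aK' i; lia.
have ga i : d (a i) - base (a i) = d (a i) - m by rewrite /base (negbTE (aH i)) aK.
have gc i : d (c i) - base (c i) = d (c i) - q.
  rewrite /base (negbTE (cK i)); case: ifP => // hH.
  by move: (cK i); rewrite (subsetP HsubK _ hH).
have mle i : m <= d (a i).
  have := base_le (a i); by rewrite /base (negbTE (aH i)) aK.
have qle i : q <= d (c i).
  have := base_le (c i); rewrite /base (negbTE (cK i)); case: ifP => // hH.
  by move: (cK i); rewrite (subsetP HsubK _ hH).
set A := a @: [set: 'I_l].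
set C := c @: [set: 'I_l].
have disj : [disjoint A & C].
  rewrite -setI_eq0; apply/eqP/setP => x; rewrite !inE.
  apply/negP => /andP[/imsetP[i _ ->] /imsetP[j _ hj]].
  by move: (cK j); rewrite -hj aK.
rewrite (bigID (mem (A :|: C))) /=.
apply: leq_trans (leq_addr _ _).
rewrite (eq_bigl [predU A & C]); last by move=> x; rewrite !inE.
rewrite bigU //=.
rewrite (big_imset _ (in2W ainj)) (big_imset _ (in2W cinj)) /=.
rewrite -big_split /=.
rewrite (eq_bigl predT); last by move=> x; rewrite inE.
rewrite -[l in l * _]card_ord -sum_nat_const.
apply: leq_sum => i _; rewrite ga gc.
have := hc i; have := aK' i; have := mle i; have := qle i; rewrite /qG; lia.
Qed.

End Main2.

Theorem lemma9p1 (T : finType) (mul1 mul2 : T -> T -> T) (e : T)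
  (G1 : is_group mul1 e) (G2 : is_group mul2 e) (hne : mul1 <> mul2)
  (hm : 3 <= mG mul1 mul2) :
  (forall (l : nat) (a : 'I_l -> T) (bul : 'I_l -> bool),
     injective a ->
     (forall i, (a i, a i) \in Rset mul1 mul2) ->
     injective (fun i => if bul i then mul1 (a i) (a i) else mul2 (a i) (a i)) ->
     (l%:Z * ((nG T)%:Z - 2 * (qG T)%:Z - (mG mul1 mul2)%:Z + 1)
        <= profit mul1 mul2)%R)
  /\
  (forall (l : nat) (a : 'I_l -> T),
     injective a ->
     (forall i, (a i, a i) \in Rset mul1 mul2) ->
     odd (nG T) || (l == 2) ->
     exists bul : 'I_l -> bool,
       injective (fun i => if bul i then mul1 (a i) (a i) else mul2 (a i) (a i))).
Proof.
split.
  move=> l a bul ainj aR cinj.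
  rewrite (profit_eq mul1 mul2 e).
  have := part1 G1 G2 ainj aR cinj.
  set s := \sum_x _ => h.
  case: (leqP (2 * qG T + mG mul1 mul2) (nG T).+1) => hle.
    nia.
  nia.
move=> l a ainj aR /orP[hodd | /eqP hl].
  exists (fun _ => true) => i j /= h; apply: ainj; exact: (sq_inj G1 hodd h).
subst l.
have aD i : mul1 (a i) (a i) != mul2 (a i) (a i).
  by move: (aR i); rewrite inE => /and3P[]; rewrite inE.
exists (fun i => (i == ord0) || (mul1 (a i) (a i) != mul1 (a ord0) (a ord0))).
move=> i j.
case: i => [[|[|i]] hi]; case: j => [[|[|j]] hj] //=; try by move=> _; apply: val_inj.
- set x := Ordinal hj; set y := Ordinal hi.
  have -> : y = ord0 by apply: val_inj.
  case: ifP => [/eqP h|/negbFE/eqP h]; first by move=> /esym/h.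
  by move=> h'; move: (aD x); rewrite h h' eqxx.
- set x := Ordinal hi; set y := Ordinal hj.
  have -> : y = ord0 by apply: val_inj.
  case: ifP => [/eqP h|/negbFE/eqP h]; first by move=> /h.
  by move=> h'; move: (aD x); rewrite h -h' eqxx.
Qed.
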